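(* Let $R,S$ be commutative rings with nonzero identity, $\delta$ an expansion of ideals of $R$, $\gamma$ an expansion of ideals of $S$, and $f:R\to S$ a $\delta\gamma$-homomorphism. Then: (1) If $f$ is a monomorphism and $J$ is a $\gamma$-$n$-ideal of $S$, then $f^{-1}(J)$ is a $\delta$-$n$-ideal of $R$. (2) If $f$ is an epimorphism and $I$ is a proper ideal of $R$ with $\ker(f)\subseteq I$ which is a $\delta$-$n$-ideal of $R$, then $f(I)$ is a $\gamma$-$n$-ideal of $S$.
   Context: An expansion of ideals of a ring $R$ is a map $\delta$ from the set of ideals of $R$ to itself such that $I\subseteq\delta(I)$ for every ideal $I$, and $\delta(I)\subseteq\delta(J)$ whenever $I\subseteq J$. $\sqrt{0}$ denotes the nilradical of the ring in question. Given an expansion $\delta$ of ideals of a ring $R$, a proper ideal $I$ of $R$ is a $\delta$-$n$-ideal if whenever $a,b\in R$ with $ab\in I$ and $a\notin\sqrt{0_R}$, then $b\in\delta(I)$. A ring homomorphism $f:R\to S$ is a $\delta\gamma$-homomorphism if $\delta(f^{-1}(J))=f^{-1}(\gamma(J))$ for every ideal $J$ of $S$. *)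

(* Defs.v *)
From mathcomp Require Import all_boot all_algebra.
Set Implicit Arguments. Unset Strict Implicit. Unset Printing Implicit Defensive.
Import GRing.Theory.
Local Open Scope ring_scope.

Definition subset_of (T : Type) (A B : T -> Prop) := forall x, A x -> B x.

Definition is_ideal_of (R : comNzRingType) (I : R -> Prop) : Prop :=
  [/\ I 0, (forall x y, I x -> I y -> I (x + y)) & (forall a x, I x -> I (a * x))].

Definition proper_ideal_of (R : comNzRingType) (I : R -> Prop) : Prop :=
  is_ideal_of I /\ ~ I 1.

Definition in_nilrad (R : comNzRingType) (a : R) : Prop := exists n : nat, a ^+ n = 0.

Definition expansion (R : comNzRingType) (delta : (R -> Prop) -> (R -> Prop)) : Prop :=
  (forall I, is_ideal_of I -> is_ideal_of (delta I)) /\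
  (forall I, is_ideal_of I -> subset_of I (delta I)) /\
  (forall I J, is_ideal_of I -> is_ideal_of J -> subset_of I J -> subset_of (delta I) (delta J)).

Definition delta_n_ideal (R : comNzRingType) (delta : (R -> Prop) -> (R -> Prop))
  (I : R -> Prop) : Prop :=
  proper_ideal_of I /\
  (forall a b : R, I (a * b) -> ~ in_nilrad a -> delta I b).

Definition preimg (R S : Type) (f : R -> S) (J : S -> Prop) : R -> Prop := fun x => J (f x).
Definition imgf (R S : Type) (f : R -> S) (I : R -> Prop) : S -> Prop :=
  fun y => exists2 x, I x & f x = y.

Definition dg_hom (R S : comNzRingType) (delta : (R -> Prop) -> (R -> Prop))
  (gamma : (S -> Prop) -> (S -> Prop)) (f : {rmorphism R -> S}) : Prop :=
  forall J : S -> Prop, is_ideal_of J ->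
    forall x, delta (preimg f J) x <-> preimg f (gamma J) x.

(* Main.v *)
Require Import Defs.
From mathcomp Require Import all_boot all_algebra.
Local Open Scope ring_scope.
Import GRing.Theory.

Lemma preimg_ideal (R S : comNzRingType) (f : {rmorphism R -> S}) (J : S -> Prop) :
  is_ideal_of J -> is_ideal_of (preimg f J).
Proof.
case=> J0 JD JM; split; rewrite /preimg.
- by rewrite rmorph0.
- by move=> x y Hx Hy; rewrite rmorphD; apply: JD.
- by move=> a x Hx; rewrite rmorphM; apply: JM.
Qed.

Theorem proposition2p20 (R S : comNzRingType)
  (delta : (R -> Prop) -> (R -> Prop)) (gamma : (S -> Prop) -> (S -> Prop))
  (f : {rmorphism R -> S}) :
  expansion delta -> expansion gamma -> dg_hom delta gamma f ->
  (injective f ->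
     forall J : S -> Prop, delta_n_ideal gamma J -> delta_n_ideal delta (preimg f J))
  /\
  ((forall y : S, exists x : R, f x = y) ->
     forall I : R -> Prop, proper_ideal_of I -> (forall x, f x = 0 -> I x) ->
       delta_n_ideal delta I -> delta_n_ideal gamma (imgf f I)).
Proof.
move=> [dI [dE dM]] [gI [gE gM]] hom; split.
- move=> finj J [[Jid J1] Jn]; split.
    split; first exact: preimg_ideal.
    by rewrite /preimg rmorph1.
  move=> a b Hab Ha.
  apply/(hom J Jid).
  apply: (Jn (f a) (f b)); first by rewrite /preimg rmorphM in Hab.
  move=> [n Hn]; apply: Ha; exists n; apply: finj.
  by rewrite rmorphXn Hn rmorph0.
- move=> fsur I [[I0 ID IM] I1] ker [_ In].
  have Iid : is_ideal_of (imgf f I).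
    split.
    + by exists 0; rewrite ?rmorph0.
    + move=> x y [u Hu <-] [v Hv <-]; exists (u + v); [exact: ID | by rewrite rmorphD].
    + move=> a x [u Hu <-]; have [r <-] := fsur a.
      by exists (r * u); [exact: IM | rewrite rmorphM].
  have back : forall x y, I y -> f x = f y -> I x.
    move=> x y Hy Hxy.
    have -> : x = (x - y) + y by rewrite subrK.
    apply: ID => //; apply: ker; by rewrite rmorphB Hxy subrr.
  split.
    split => //; move=> [x Hx Hx1].
    apply: I1; apply: (back 1 x Hx); by rewrite rmorph1.
  move=> a b [x Hx Hxab] Ha.
  have [r Hr] := fsur a; have [s Hs] := fsur b.
  subst a b.
  have Hrs : I (r * s) by apply: (back _ x Hx); rewrite rmorphM.
  have Hnr : ~ in_nilrad r.
    move=> [n Hn]; apply: Ha; exists n; by rewrite -rmorphXn Hn rmorph0.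
  have := In r s Hrs Hnr.
  have sub : subset_of I (preimg f (imgf f I)).
    by move=> y Hy; exists y.
  have IidR : is_ideal_of I by split.
  move=> /(dM _ _ IidR (@preimg_ideal _ _ f _ Iid) sub) H.
  exact/(hom _ Iid).
Qed.
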